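(* Suppose $k=n-q+2$ and let $x,y\in G\setminus K$ with $x\ne y$. Then there is $(v,w)\in\mathrm{diff}(\circ,\ast)$ such that $\{v,w,v\circ w\}\cap\{x,y\}=\emptyset$, $v\in G\setminus K$, and $w\in K$ or $v\circ w\in K$.
   Context: $G$ is a set of size $n$ and $G(\circ)$, $G(\ast)$ are distinct groups on $G$ with the same identity element $1$, and $\mathrm{dist}_1=0$. $\mathrm{diff}(\circ,\ast)=\{(a,b):a\circ b\ne a\ast b\}$, $\mathrm{dist}_a=|\{b:a\circ b\ne a\ast b\}|$; $K=\{a:\mathrm{dist}_a<n/3\}$, $k=|K|$; $q=\lceil n/3\rceil$. *)

(* Defs.v *)
From mathcomp Require Import all_boot.
Set Implicit Arguments. Unset Strict Implicit. Unset Printing Implicit Defensive.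

Definition is_group (T : Type) (op : T -> T -> T) (e : T) : Prop :=
  associative op /\ left_id e op /\ right_id e op /\
  (forall a, exists b, op b a = e /\ op a b = e).

Definition diffset (T : finType) (o s : T -> T -> T) : {set T * T} :=
  [set p | o p.1 p.2 != s p.1 p.2].

Definition dist (T : finType) (o s : T -> T -> T) (a : T) : nat :=
  #|[set b | o a b != s a b]|.

(* K = { a : dist_a < n/3 }, with n = |T|;  dist_a < n/3  <->  3 dist_a < n *)
Definition Kset (T : finType) (o s : T -> T -> T) : {set T} :=
  [set a | 3 * dist o s a < #|T|].

(* q = ceil(n/3) *)
Definition qval (n : nat) : nat := (n + 2) %/ 3.

(* Main.v *)
Require Import Defs.
From mathcomp Require Import all_boot.
From mathcomp Require Import zify.
Set Implicit Arguments. Unset Strict Implicit.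

Lemma g_rcancel (T : Type) (op : T -> T -> T) e :
  is_group op e -> forall a b c, op a c = op b c -> a = b.
Proof.
move=> [A [L [R I]]] a b c H. have [c' [H1 H2]] := I c.
by rewrite -[a]R -[b]R -H2 !A H.
Qed.

Lemma g_lcancel (T : Type) (op : T -> T -> T) e :
  is_group op e -> forall a b c, op c a = op c b -> a = b.
Proof.
move=> [A [L [R I]]] a b c H. have [c' [H1 H2]] := I c.
by rewrite -[a]L -[b]L -H1 -!A H.
Qed.

Lemma g_solve (T : Type) (op : T -> T -> T) e :
  is_group op e -> forall a z, exists b, op a b = z.
Proof.
move=> [A [L [R I]]] a z. have [a' [H1 H2]] := I a.
by exists (op a' z); rewrite A H2 L.
Qed.

Lemma card_pre_inj (T : finType) (f : T -> T) (A : {set T}) :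
  injective f -> #|[set t | f t \in A]| <= #|A|.
Proof.
move=> fi; rewrite -(card_imset _ fi); apply: subset_leq_card.
by apply/subsetP=> z /imsetP [t]; rewrite inE => Ht ->.
Qed.

Lemma exists_notin (T : finType) (A : {set T}) :
  #|A| < #|T| -> exists c, c \notin A.
Proof.
move=> H. have : ~~ ([set: T] \subset A).
  apply/negP => /subset_leq_card; rewrite cardsT leqNgt H //.
by case/subsetPn => c _ Hc; exists c.
Qed.

Lemma cardU_le (T : finType) (A B : {set T}) : #|A :|: B| <= #|A| + #|B|.
Proof. rewrite cardsU; lia. Qed.

Lemma card3 (T : finType) (A B C : {set T}) : #|A :|: B :|: C| <= #|A| + #|B| + #|C|.
Proof. apply: leq_trans (cardU_le _ _) _; rewrite leq_add2r; exact: cardU_le. Qed.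

Lemma card4 (T : finType) (A B C D : {set T}) : #|A :|: B :|: C :|: D| <= #|A| + #|B| + #|C| + #|D|.
Proof. apply: leq_trans (cardU_le _ _) _; rewrite leq_add2r; exact: card3. Qed.

Lemma ar3 (a b c n : nat) : a <= 3 -> b <= 3 -> c <= 3 -> 10 <= n -> a + b + c < n.
Proof. lia. Qed.

Lemma ar4 (a b c d n : nat) : a <= 2 -> b <= 2 -> c <= 2 -> d <= 2 -> 10 <= n -> a + b + c + d < n.
Proof. lia. Qed.

Lemma arK (d u v a b : nat) : d <= v -> u = 1 + v -> u <= a + b -> a <= 2 -> b <= 2 -> 4 <= d -> False.
Proof. lia. Qed.

Theorem lemma10p7 (T : finType) (o s : T -> T -> T) (e : T)
  (Go : is_group o e) (Gs : is_group s e) (hdist : o <> s)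
  (hk : #|Kset o s| = #|T| - qval #|T| + 2)
  (x y : T) (hx : x \notin Kset o s) (hy : y \notin Kset o s) (hxy : x != y) :
  exists v w : T,
    [/\ (v, w) \in diffset o s,
        [disjoint [set v; w; o v w] & [set x; y]],
        v \notin Kset o s &
        (w \in Kset o s) || (o v w \in Kset o s)].
Proof.
have [oA [oL [oR oI]]] := Go. have [sA [sL [sR sI]]] := Gs.
set K := Kset o s in hk hx hy *.
set D := fun a => [set b | o a b != s a b].
have distE : forall a, dist o s a = #|D a| by [].
have inK : forall a, (a \in K) = (3 * #|D a| < #|T|) by move=> a; rewrite /K /Kset inE.
have n0 : 0 < #|T| by apply/card_gt0P; exists e.
have De : D e = set0 by apply/setP=> b; rewrite !inE oL sL eqxx.
have eK : e \in K by rewrite inK De cards0.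
clearbody K.
set B := ~: K.
have cB := cardsC K. rewrite -/B in cB.
have xyB : [set x; y] \subset B.
  by apply/subsetP=> z /set2P[]->; rewrite in_setC.
have c2 : #|[set x; y]| = 2 by rewrite cards2 hxy.
have nB2 : 2 <= #|B| by rewrite -c2 subset_leq_card.
rewrite /qval in hk.
have ocan := g_lcancel Go. have rcan := g_rcancel Go.
have scan := g_lcancel Gs. have srcan := g_rcancel Gs.
have osol := g_solve Go.
case: (leqP 3 #|B|) => hB.
- have [v vB vxy] : exists2 v, v \in B & v \notin [set x; y].
    apply/subsetPn/negP => /subset_leq_card; rewrite c2; lia.
  have vK : v \notin K by rewrite -in_setC.
  have Dv : #|B| + 2 <= #|D v| by move: vK; rewrite inK -leqNgt; lia.
  have injv : injective (o v) by move=> a b; apply: ocan.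
  clear hk cB inK nB2 hB.
  case: (boolP [exists w, [&& w \in D v, w \notin [set x; y], o v w \notin [set x; y] & (w \in K) || (o v w \in K)]]).
  + case/existsP => w /and4P [wD wxy vwxy wK].
    exists v, w; split => //.
    * by move: wD; rewrite !inE.
    * rewrite -setI_eq0; apply/eqP/setP => z; rewrite !inE; apply/negbTE; apply/negP => /andP [H1 H2].
      move: H2 vxy wxy vwxy; rewrite !inE.
      by case/orP: H1 => [/orP[]|]/eqP-> ->.
  + move/existsPn => hng.
    set P := [set w | o v w \in [set x; y]].
    have cP : #|P| <= 2 by rewrite -c2; apply: card_pre_inj.
    have sub1 : D v \subset B :|: P.
      apply/subsetP => w wD; rewrite in_setU in_setC /P in_set.
      case wK: (w \in K) => //=.
      move: (hng w); rewrite wD wK /= andbT negb_and !negbK => /orP [] //.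
      move=> H; exfalso; move: wK; case/set2P: H => ->; [by rewrite (negbTE hx) | by rewrite (negbTE hy)].
    have eq1 : D v = B :|: P.
      apply/eqP; rewrite eqEcard sub1 /=. have := cardU_le B P. lia.
    have BP0 : B :&: P = set0.
      apply/eqP; rewrite -cards_eq0. have := cardsU B P. rewrite -eq1. lia.
    set B' := B :\: [set x; y].
    have stab : [set o v b | b in B'] \subset B'.
      apply/subsetP => z /imsetP [b bB' ->].
      move: bB'; rewrite in_setD => /andP [bxy bB].
      have bD : b \in D v by rewrite eq1 in_setU bB.
      have bP : o v b \notin [set x; y].
        apply/negP => H. have : b \in B :&: P by rewrite in_setI bB /P in_set H.
        by rewrite BP0 inE.
      move: (hng b); rewrite bD bxy bP /= negb_or => /andP [_ vbK].
      by rewrite in_setD bP in_setC vbK.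
    have eqI : [set o v b | b in B'] = B'.
      by apply/eqP; rewrite eqEcard stab (card_imset _ injv) leqnn.
    have vB'' : v \in B' by rewrite in_setD vxy vB.
    move: vB''; rewrite -eqI => /imsetP [b bB' vb].
    have be : b = e by apply: (ocan _ _ v); rewrite -vb oR.
    by move: bB'; rewrite be in_setD in_setC eK andbF.

- have Bxy : B = [set x; y] by apply/eqP; rewrite eq_sym eqEcard xyB c2; lia.
  have hKc : forall a, (a \in K) = (a \notin [set x; y]) by move=> a; rewrite -Bxy in_setC negbK.
  have nB : #|B| = 2 by rewrite Bxy c2.
  have n10 : 10 <= #|T| /\ #|T| <= 12 by lia.
  have hK3 : forall a, a \in K -> #|D a| <= 3 by move=> a; rewrite inK; lia.
  have hB4 : forall a, a \notin K -> 4 <= #|D a| by move=> a; rewrite inK -leqNgt; lia.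
  clear hk cB inK nB2 hB nB.
  have n10' : 10 <= #|T| by case: n10.
  have c1 : forall z : T, #|[set z]| <= 2 by move=> z; rewrite cards1.
  have c2' : #|[set x; y]| <= 2 by rewrite c2.
  have preL : forall c (A : {set T}), #|[set t | o c t \in A]| <= #|A|.
    by move=> c A; apply: card_pre_inj => p q; apply: ocan.
  have preR : forall c (A : {set T}), #|[set t | o t c \in A]| <= #|A|.
    by move=> c A; apply: card_pre_inj => p q; apply: rcan.
  have LemA : forall a b, a \in K -> b \in K -> o a b \in K -> s a b = o a b.
    move=> a b aK bK cK.
    have : #|D b :|: [set t | o b t \in D a] :|: D (o a b)| < #|T|.
      apply: leq_ltn_trans (card3 _ _ _) _.
      exact: ar3 (hK3 _ bK) (leq_trans (preL _ _) (hK3 _ aK)) (hK3 _ cK) n10'.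
    case/exists_notin => t; rewrite !in_setU !negb_or => /andP [/andP [tb tba] tc].
    move: tb tba tc; rewrite !inE !negbK => /eqP tb /eqP tba /eqP tc.
    apply: (srcan _ _ t). by rewrite -sA -tb -tba oA tc.
  have TrR : forall a b t, a \in K -> b \in K -> t \in K -> o b t \in K -> o (o a b) t \in K ->
     o (o a b) t = s (s a b) t.
    move=> a b t aK bK tK btK cK.
    rewrite -oA in cK *. by rewrite -(LemA _ _ aK btK cK) -(LemA _ _ bK tK btK) sA.
  have TrC : forall t a b, t \in K -> a \in K -> b \in K -> o t a \in K -> o t (o a b) \in K ->
     o t (o a b) = s t (s a b).
    move=> t a b tK aK bK taK cK. rewrite oA in cK *.
    by rewrite -(LemA _ _ taK bK cK) -(LemA _ _ tK aK taK) sA.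
  have Cons : forall a1 b1 a2 b2, a1 \in K -> b1 \in K -> a2 \in K -> b2 \in K ->
     o a1 b1 = o a2 b2 -> s a1 b1 = s a2 b2.
    move=> a1 b1 a2 b2 a1K b1K a2K b2K eq12.
    have : #|[set x; y] :|: [set t | o b1 t \in [set x; y]] :|: [set t | o b2 t \in [set x; y]]
             :|: [set t | o (o a1 b1) t \in [set x; y]]| < #|T|.
      apply: leq_ltn_trans (card4 _ _ _ _) _.
      exact: ar4 c2' (leq_trans (preL _ _) c2') (leq_trans (preL _ _) c2') (leq_trans (preL _ _) c2') n10'.
    case/exists_notin => t; rewrite in_setU negb_or => /andP [+ t4]; rewrite in_setU negb_or => /andP [+ t3]; rewrite in_setU negb_or => /andP [t1 t2].
    rewrite in_set in t2; rewrite in_set in t3; rewrite in_set in t4.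
    rewrite -!hKc in t1 t2 t3 t4.
    have e1 := TrR _ _ _ a1K b1K t1 t2 t4.
    have t4' : o (o a2 b2) t \in K by rewrite -eq12.
    have e2 := TrR _ _ _ a2K b2K t1 t3 t4'.
    apply: (srcan _ _ t). by rewrite -e1 -e2 eq12.
  have PickA : forall z (X : {set T}), #|X| <= 2 ->
      exists a b, [/\ a \in K, b \in K, a \notin X & o a b = z].
    move=> z X cX.
    have : #|[set x; y] :|: X :|: [set a | o a x \in [set z]] :|: [set a | o a y \in [set z]]| < #|T|.
      apply: leq_ltn_trans (card4 _ _ _ _) _.
      exact: ar4 c2' cX (leq_trans (preR _ _) (c1 _)) (leq_trans (preR _ _) (c1 _)) n10'.
    case/exists_notin => a; rewrite in_setU negb_or => /andP [+ a4]; rewrite in_setU negb_or => /andP [+ a3]; rewrite in_setU negb_or => /andP [a1 a2].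
    have [b ab] := osol a z.
    exists a, b; split => //; first by rewrite hKc.
    rewrite hKc !inE negb_or; apply/andP; split; apply/eqP => bE; subst b.
     - by move: a3; rewrite !inE ab eqxx.
     - by move: a4; rewrite !inE ab eqxx.
  have Key : forall z a0 b0, z \notin K -> a0 \in K -> b0 \in K -> o a0 b0 = z -> s a0 b0 != z.
    move=> z a0 b0 zK a0K b0K ez. apply/eqP => sz.
    have zxy : z \in [set x; y] by move: zK; rewrite hKc negbK.
    have sub : D z \subset ([set x; y] :|: [set t | o z t \in [set x; y]]) :\ e.
      apply/subsetP => t tD.
      have te : t != e.
        by apply: contraTneq tD => ->; rewrite inE oR sR eqxx.
      rewrite in_setD1 te /= in_setU.
      case tK : (t \in K); last by move: tK; rewrite hKc => /negbFE ->.
      case ztK : (o z t \in K); last by rewrite in_set; move: ztK; rewrite hKc => /negbFE ->; rewrite orbT.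
      exfalso.
      have [a [b [aK bK aX ab]]] := PickA z ([set a | o a x \in [set o z t]] :|: [set a | o a y \in [set o z t]])
        (leq_trans (cardU_le _ _) (leq_add (leq_trans (preR x _) (eq_leq (cards1 _)))
                                           (leq_trans (preR y _) (eq_leq (cards1 _))))).
      have btK : o b t \in K.
        rewrite hKc !inE negb_or; apply/andP; split; apply/eqP => E.
        - by move: aX; rewrite !inE -E oA ab eqxx.
        - by move: aX; rewrite !inE -E oA ab eqxx orbT.
      have ztK' : o (o a b) t \in K by rewrite ab.
      have e1 := TrR _ _ _ aK bK tK btK ztK'.
      have e2 : s a b = s a0 b0 by apply: Cons => //; rewrite ab ez.
      move: tD; rewrite inE -ab e1 e2 sz ab eqxx //.
    have eU : e \in [set x; y] :|: [set t | o z t \in [set x; y]] by rewrite in_setU in_set oR zxy orbT.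
    have := cardsD1 e ([set x; y] :|: [set t | o z t \in [set x; y]]).
    rewrite eU => hD.
    exact: arK (subset_leq_card sub) hD (cardU_le _ _) c2' (leq_trans (preL _ _) c2') (hB4 _ zK).
  have KeyC : forall z a0 b0 t, a0 \in K -> b0 \in K -> o a0 b0 = z -> t \in K -> o t z \in K ->
      o t z = s t (s a0 b0).
    move=> z a0 b0 t a0K b0K ez tK tzK.
    have [a [b [aK bK aX ab]]] := PickA z [set a | o t a \in [set x; y]] (leq_trans (preL t _) (eq_leq c2)).
    have taK : o t a \in K by rewrite hKc; rewrite in_set in aX.
    rewrite -ab in tzK *. rewrite (TrC _ _ _ tK aK bK taK tzK). congr (s t _).
    by apply: Cons => //; rewrite ab ez.
  have c0 : #|@set0 T| <= 2 by rewrite cards0.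
  have [ax [bx [axK bxK _ exy]]] := PickA x set0 c0.
  have [ay [by_ [ayK byK _ eyy]]] := PickA y set0 c0.
  have cx := Key x ax bx hx axK bxK exy.
  have cy := Key y ay by_ hy ayK byK eyy.
  have : #|[set x; y] :|: [set e] :|: [set t | o t x \in [set y]] :|: [set t | o t y \in [set x]]| < #|T|.
    apply: leq_ltn_trans (card4 _ _ _ _) _.
    exact: ar4 c2' (c1 _) (leq_trans (preR _ _) (c1 _)) (leq_trans (preR _ _) (c1 _)) n10'.
  case/exists_notin => t; rewrite in_setU negb_or => /andP [+ t4]; rewrite in_setU negb_or => /andP [+ t3];
     rewrite in_setU negb_or => /andP [t1 t2].
  rewrite -hKc in t1. rewrite in_set in t3; rewrite in_set in t4. rewrite !inE in t2 t3 t4.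
  have txx : o t x != x.
    apply: contra t2 => /eqP H; apply/eqP; apply: (rcan _ _ x); by rewrite H oL.
  have tyy : o t y != y.
    apply: contra t2 => /eqP H; apply/eqP; apply: (rcan _ _ y); by rewrite H oL.
  have txK : o t x \in K by rewrite hKc !inE negb_or txx t3.
  have tyK : o t y \in K by rewrite hKc !inE negb_or t4 tyy.
  have xD : x \in D t.
    rewrite inE (KeyC _ _ _ _ axK bxK exy t1 txK).
    apply: contra cx => /eqP H; apply/eqP; exact: (scan _ _ t).
  have yD : y \in D t.
    rewrite inE (KeyC _ _ _ _ ayK byK eyy t1 tyK).
    apply: contra cy => /eqP H; apply/eqP; exact: (scan _ _ t).
  have [s1 ts1] := osol t x.
  have [s2 ts2] := osol t y.
  have s1K : s1 \in K.
    rewrite hKc !inE negb_or; apply/andP; split; apply/eqP => E; subst s1.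
    - by move: txx; rewrite ts1 eqxx.
    - by move: t4; rewrite ts1 eqxx.
  have s2K : s2 \in K.
    rewrite hKc !inE negb_or; apply/andP; split; apply/eqP => E; subst s2.
    - by move: t3; rewrite ts2 eqxx.
    - by move: tyy; rewrite ts2 eqxx.
  have s1D : s1 \in D t.
    have E : o t s1 = o ax bx by rewrite ts1 exy.
    by rewrite inE ts1 (Cons _ _ _ _ t1 s1K axK bxK E) eq_sym.
  have s2D : s2 \in D t.
    have E : o t s2 = o ay by_ by rewrite ts2 eyy.
    by rewrite inE ts2 (Cons _ _ _ _ t1 s2K ayK byK E) eq_sym.
  have sub : [set x; y] :|: [set s1; s2] \subset D t.
    rewrite subUset; apply/andP; split; apply/subsetP => z /set2P [] ->; done.
  have I0 : [set x; y] :&: [set s1; s2] = set0.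
    apply/setP => z; rewrite in_setI in_set0; apply/negbTE; apply/negP => /andP [zxy /set2P [] E]; subst z.
    - by move: s1K; rewrite hKc zxy.
    - by move: s2K; rewrite hKc zxy.
  have s12 : s1 != s2 by apply/eqP => E; move: hxy; rewrite -ts1 -ts2 E eqxx.
  have := subset_leq_card sub. rewrite cardsU I0 cards0 c2 cards2 s12 => h4.
  by have := leq_trans h4 (hK3 _ t1).
Qed.
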